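(* $\{1,2,4\}\in\mathcal{I}\setminus\mathcal{I}_1$.
   Context: For a summable sequence $\mathbf{x}=(x_n)$ of positive reals, $\mathcal{A}(\mathbf{x})=\{\sum_{n\in A}x_n: A\subseteq\mathbb{N}\}$ is its achievement set and its cardinal function $f$ assigns to $x\in\mathcal{A}(\mathbf{x})$ the cardinality (a positive integer, $\omega$, or $\mathfrak{c}$) of $\{(\varepsilon_n)\in\{0,1\}^{\mathbb{N}}:\sum\varepsilon_nx_n=x\}$. $\mathcal{I}$ is the family of ranges of cardinal functions of such sequences whose achievement set is a finite union of (nondegenerate) closed intervals; $\mathcal{I}_1$ is the family of ranges of cardinal functions of such sequences whose achievement set is a single closed interval. *)

(* Defs.v *)
From Stdlib Require Import Reals List.
Open Scope R_scope.

Definition pos_summable (x : nat -> R) : Prop :=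
  (forall n, 0 < x n) /\ exists l, infinite_sum x l.

(* eps : nat -> bool is the indicator of a subset A of N;
   [represents x eps y] : sum_{n in A} x_n = y. *)
Definition represents (x : nat -> R) (eps : nat -> bool) (y : R) : Prop :=
  infinite_sum (fun n => if eps n then x n else 0) y.

Definition achievement_set (x : nat -> R) (y : R) : Prop :=
  exists eps, represents x eps y.

Definition has_card {T : Type} (P : T -> Prop) (n : nat) : Prop :=
  exists l : list T, length l = n /\ NoDup l /\ (forall e, P e <-> In e l).

(* The range of the cardinal function f of x equals the finite set S
   of positive integers: every value f(y), y in A(x), is a finite cardinal
   in S, and every element of S is attained. *)
Definition cardfun_range_eq (x : nat -> R) (S : list nat) : Prop :=
  (forall y, achievement_set x y ->
     exists n, In n S /\ has_card (fun eps => represents x eps y) n) /\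
  (forall n, In n S -> exists y, achievement_set x y /\
     has_card (fun eps => represents x eps y) n).

Definition finite_union_intervals (A : R -> Prop) : Prop :=
  exists I : list (R * R),
    (forall p, In p I -> fst p < snd p) /\
    (forall y, A y <-> exists p, In p I /\ fst p <= y <= snd p).

Definition single_interval (A : R -> Prop) : Prop :=
  exists a b, a < b /\ (forall y, A y <-> a <= y <= b).

Definition in_I (S : list nat) : Prop :=
  exists x, pos_summable x /\ finite_union_intervals (achievement_set x)
            /\ cardfun_range_eq x S.

Definition in_I1 (S : list nat) : Prop :=
  exists x, pos_summable x /\ single_interval (achievement_set x)
            /\ cardfun_range_eq x S.

(* Main.v *)
Require Import Defs.
From Stdlib Require Import Reals List.
From Stdlib Require Import Lra Lia Classical FunctionalExtensionality Arith Wf_nat FinFun ClassicalEpsilon.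
Open Scope R_scope.
Import ListNotations.

Fixpoint psum (a : nat -> R) (n : nat) : R :=
  match n with O => 0 | S k => psum a k + a k end.
Definition ssum (a : nat -> R) (l : R) : Prop := Un_cv (psum a) l.

Lemma psum_S_sum (a : nat -> R) n : psum a (S n) = sum_f_R0 a n.
Proof. induction n; simpl in *; [lra|]. rewrite <- IHn. simpl. lra. Qed.

Lemma inf_ssum a l : infinite_sum a l <-> ssum a l.
Proof.
  split; intros H eps Heps; destruct (H eps Heps) as [N HN].
  - exists (S N). intros n Hn. destruct n; [lia|]. rewrite psum_S_sum. apply HN. lia.
  - exists N. intros n Hn. rewrite <- psum_S_sum. apply HN. lia.
Qed.

Lemma ssum_unique a l1 l2 : ssum a l1 -> ssum a l2 -> l1 = l2.
Proof. apply UL_sequence. Qed.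

Lemma psum_ext a b n : (forall i, a i = b i) -> psum a n = psum b n.
Proof. intros H; induction n; simpl; [lra|]. rewrite IHn, H. lra. Qed.

Lemma ssum_ext a b l : (forall n, a n = b n) -> ssum a l -> ssum b l.
Proof. intros H H1 eps He. destruct (H1 eps He) as [N HN]. exists N. intros n Hn.
  rewrite <- (psum_ext a b n H). auto. Qed.

Lemma psum_plus a b n : psum (fun i => a i + b i) n = psum a n + psum b n.
Proof. induction n; simpl; [lra|]. rewrite IHn. lra. Qed.
Lemma psum_minus a b n : psum (fun i => a i - b i) n = psum a n - psum b n.
Proof. induction n; simpl; [lra|]. rewrite IHn. lra. Qed.

Lemma ssum_plus a b la lb : ssum a la -> ssum b lb -> ssum (fun i => a i + b i) (la + lb).
Proof. intros Ha Hb. pose proof (CV_plus _ _ _ _ Ha Hb) as H.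
  intros eps He. destruct (H eps He) as [N HN]. exists N. intros n Hn.
  rewrite psum_plus. auto. Qed.

Lemma ssum_minus a b la lb : ssum a la -> ssum b lb -> ssum (fun i => a i - b i) (la - lb).
Proof. intros Ha Hb. pose proof (CV_minus _ _ _ _ Ha Hb) as H.
  intros eps He. destruct (H eps He) as [N HN]. exists N. intros n Hn.
  rewrite psum_minus. auto. Qed.

Lemma cv_nonneg (w : nat -> R) l : Un_cv w l -> (forall n, 0 <= w n) -> 0 <= l.
Proof. intros H Hw. destruct (Rle_or_lt 0 l) as [|Hl]; auto.
  destruct (H (-l)) as [N HN]; [lra|]. specialize (HN N (le_n _)). specialize (Hw N).
  unfold R_dist in HN. apply Rabs_def2 in HN. lra. Qed.

Lemma psum_nonneg a n : (forall i, 0 <= a i) -> 0 <= psum a n.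
Proof. intros H; induction n; simpl; [lra|]. specialize (H n). lra. Qed.

Lemma psum_le_lim a l n : (forall i, 0 <= a i) -> ssum a l -> psum a n <= l.
Proof. intros Ha H. apply (growing_ineq (psum a)); auto.
  intro k. simpl. specialize (Ha k). lra. Qed.

Lemma term_le_lim a l i : (forall i, 0 <= a i) -> ssum a l -> a i <= l.
Proof. intros Ha H. pose proof (psum_le_lim a l (S i) Ha H). simpl in H0.
  pose proof (psum_nonneg a i Ha). lra. Qed.

Lemma ssum_nonneg a l : (forall i, 0 <= a i) -> ssum a l -> 0 <= l.
Proof. intros Ha H. apply (cv_nonneg _ _ H). intro; apply psum_nonneg; auto. Qed.

Lemma ssum_le a b la lb : (forall i, a i <= b i) -> ssum a la -> ssum b lb -> la <= lb.
Proof. intros H Ha Hb. pose proof (ssum_minus _ _ _ _ Hb Ha) as Hd.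
  apply ssum_nonneg in Hd; [lra|]. intro i; specialize (H i); lra. Qed.

Lemma ssum_zero a i : (forall i, 0 <= a i) -> ssum a 0 -> a i = 0.
Proof. intros Ha H. pose proof (term_le_lim a 0 i Ha H). specialize (Ha i). lra. Qed.

Lemma psum_shift a m n : psum (fun k => a (m + k)%nat) n = psum a (m + n) - psum a m.
Proof. induction n; simpl.
  - rewrite Nat.add_0_r. lra.
  - rewrite Nat.add_succ_r. simpl. rewrite IHn. lra. Qed.

Lemma ssum_shift a l m : ssum a l -> ssum (fun k => a (m + k)%nat) (l - psum a m).
Proof. intros H eps He. destruct (H eps He) as [N HN]. exists N. intros n Hn.
  rewrite psum_shift. unfold R_dist in *.
  replace (psum a (m + n) - psum a m - (l - psum a m)) with (psum a (m+n) - l) by ring.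
  apply HN. lia. Qed.

Lemma ssum_unshift a l m : ssum (fun k => a (m + k)%nat) l -> ssum a (l + psum a m).
Proof. intros H eps He. destruct (H eps He) as [N HN]. exists (m + N)%nat. intros n Hn.
  specialize (HN (n - m)%nat ltac:(lia)). rewrite psum_shift in HN.
  replace (m + (n - m))%nat with n in HN by lia. unfold R_dist in *.
  replace (psum a n - (l + psum a m)) with (psum a n - psum a m - l) by ring. auto. Qed.

Lemma ssum_fin a m : (forall i, (m <= i)%nat -> a i = 0) -> ssum a (psum a m).
Proof. intros H eps He. exists m. intros n Hn. unfold R_dist.
  replace (psum a n) with (psum a m). rewrite Rminus_diag, Rabs_R0; auto.
  induction Hn; auto. simpl. rewrite H; [|lia]. lra. Qed.

Definition tm (y : nat -> R) (e : nat -> bool) (i : nat) : R := if e i then y i else 0.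
Definition rep y e v := ssum (tm y e) v.
Definition sing (n : nat) : nat -> bool := fun i => Nat.eqb i n.
Definition tset (k : nat) : nat -> bool := fun i => Nat.ltb k i.
Definition uni (e f : nat -> bool) : nat -> bool := fun i => orb (e i) (f i).
Definition disj (e f : nat -> bool) := forall i, e i = true -> f i = false.
Definition supp_ge (e : nat -> bool) m := forall i, (i < m)%nat -> e i = false.
Definition allpos (y : nat -> R) := forall i, 0 < y i.

Lemma represents_rep y e v : represents y e v <-> rep y e v.
Proof. unfold represents, rep. apply inf_ssum. Qed.

Lemma tm_nonneg y e : allpos y -> forall i, 0 <= tm y e i.
Proof. intros H i; unfold tm; destruct (e i); [specialize (H i)|]; lra. Qed.

Lemma rep_nonneg y e v : allpos y -> rep y e v -> 0 <= v.
Proof. intros H1 H2. apply (ssum_nonneg _ _ (tm_nonneg y e H1) H2). Qed.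

Lemma rep_term_le y e v i : allpos y -> rep y e v -> e i = true -> y i <= v.
Proof. intros H1 H2 H3. pose proof (term_le_lim _ _ i (tm_nonneg y e H1) H2).
  unfold tm in H; rewrite H3 in H; auto. Qed.

Lemma rep_le_total y s e v : allpos y -> ssum y s -> rep y e v -> v <= s.
Proof. intros H1 H2 H3. refine (ssum_le _ _ _ _ _ H3 H2). intro i.
  unfold tm; destruct (e i); [lra|]. specialize (H1 i); lra. Qed.

Lemma psum_zero a n : (forall i, (i < n)%nat -> a i = 0) -> psum a n = 0.
Proof. induction n; intros H; simpl; [auto|]. rewrite IHn, H; [lra|lia|intros; apply H; lia]. Qed.

Lemma rep_sing y n : rep y (sing n) (y n).
Proof. unfold rep. replace (y n) with (psum (tm y (sing n)) (S n)).
  - apply ssum_fin. intros i Hi. unfold tm, sing. destruct (Nat.eqb_spec i n); [lia|auto].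
  - simpl. rewrite psum_zero. unfold tm, sing. rewrite Nat.eqb_refl. lra.
    intros i Hi. unfold tm, sing. destruct (Nat.eqb_spec i n); [lia|auto]. Qed.

Lemma rep_false y : rep y (fun _ => false) 0.
Proof. unfold rep. replace 0 with (psum (tm y (fun _ => false)) 0) by reflexivity.
  apply ssum_fin. intros; reflexivity. Qed.

Lemma rep_union y e f a b : disj e f -> rep y e a -> rep y f b -> rep y (uni e f) (a + b).
Proof. intros Hd Ha Hb. unfold rep. apply (ssum_ext (fun i => tm y e i + tm y f i)).
  - intro i. unfold tm, uni. specialize (Hd i). destruct (e i), (f i); simpl; try lra;
    try discriminate (Hd eq_refl).
  - apply ssum_plus; auto. Qed.

Lemma rep_diff y e f v a : disj e f -> rep y (uni e f) v -> rep y e a -> rep y f (v - a).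
Proof. intros Hd Hv Ha. unfold rep. apply (ssum_ext (fun i => tm y (uni e f) i - tm y e i)).
  - intro i. unfold tm, uni. specialize (Hd i). destruct (e i), (f i); simpl; try lra;
    try discriminate (Hd eq_refl).
  - apply ssum_minus; auto. Qed.

Lemma rep_zero y e i : allpos y -> rep y e 0 -> e i = false.
Proof. intros H1 H2. pose proof (ssum_zero _ i (tm_nonneg y e H1) H2). unfold tm in H.
  destruct (e i); auto. specialize (H1 i). lra. Qed.

Lemma rep_unique y e v1 v2 : rep y e v1 -> rep y e v2 -> v1 = v2.
Proof. apply ssum_unique. Qed.

Definition rt (y : nat -> R) (s : R) (m : nat) := s - psum y m.

Lemma rep_tail_le y s e v m : allpos y -> ssum y s -> supp_ge e m -> rep y e v -> v <= rt y s m.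
Proof. intros H1 H2 H3 H4. unfold rt.
  pose proof (ssum_shift _ _ m H4) as Ha. pose proof (ssum_shift _ _ m H2) as Hb.
  rewrite (psum_zero (tm y e) m) in Ha.
  2:{ intros i Hi. unfold tm. rewrite H3; auto. }
  replace v with (v - 0) by ring. refine (ssum_le _ _ _ _ _ Ha Hb). intro i.
  unfold tm. destruct (e _); [lra|]. specialize (H1 (m+i)%nat); lra. Qed.

Lemma rep_tset y s k : ssum y s -> rep y (tset k) (rt y s (S k)).
Proof. intros H. unfold rep, rt. pose proof (ssum_shift _ _ (S k) H) as Hb.
  replace (s - psum y (S k)) with ((s - psum y (S k)) + psum (tm y (tset k)) (S k)).
  - apply ssum_unshift. refine (ssum_ext _ _ _ _ Hb). intro i.
    unfold tm, tset. destruct (Nat.ltb_spec k (S k + i)); [auto|lia].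
  - rewrite (psum_zero (tm y (tset k))); [ring|]. intros i Hi. unfold tm, tset.
    destruct (Nat.ltb_spec k i); [lia|auto]. Qed.

Lemma rt_S y s n : rt y s (S n) = rt y s n - y n.
Proof. unfold rt; simpl; ring. Qed.

Lemma rt_nonneg y s n : allpos y -> ssum y s -> 0 <= rt y s n.
Proof. intros H1 H2. unfold rt. pose proof (psum_le_lim y s n (fun i => Rlt_le _ _ (H1 i)) H2). lra. Qed.

Lemma rt_cv0 y s : ssum y s -> forall eps, 0 < eps -> exists N, forall n, (N <= n)%nat -> rt y s n < eps.
Proof. intros H eps He. destruct (H eps He) as [N HN]. exists N. intros n Hn.
  specialize (HN n Hn). unfold R_dist in HN. apply Rabs_def2 in HN. unfold rt. lra. Qed.

Lemma y_small y s : allpos y -> ssum y s -> forall eps, 0 < eps -> exists N, forall n, (N <= n)%nat -> y n < eps.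
Proof. intros H0 H eps He. destruct (rt_cv0 y s H eps He) as [N HN]. exists N. intros n Hn.
  specialize (HN n Hn).
  pose proof (rt_nonneg y s (S n) H0 H). rewrite rt_S in H1. lra. Qed.

Fixpoint grem (y : nat -> R) (m : nat) (t : R) (k : nat) : R :=
  match k with
  | O => t
  | S k' => if Nat.leb m k' then
              (if Rle_dec (y k') (grem y m t k') then grem y m t k' - y k' else grem y m t k')
            else grem y m t k'
  end.
Definition gre y m t : nat -> bool := fun k =>
  if Nat.leb m k then (if Rle_dec (y k) (grem y m t k) then true else false) else false.

Lemma gre_psum y m t k : psum (tm y (gre y m t)) k = t - grem y m t k.
Proof. induction k; simpl; [ring|]. rewrite IHk. unfold tm, gre.
  destruct (Nat.leb m k); [destruct (Rle_dec (y k) (grem y m t k))|]; ring. Qed.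

Lemma gre_supp y m t : supp_ge (gre y m t) m.
Proof. intros i Hi. unfold gre. destruct (Nat.leb_spec m i); [lia|auto]. Qed.

Lemma kakeya y s m t : allpos y -> ssum y s ->
  (forall n, (m <= n)%nat -> y n <= rt y s (S n)) -> 0 <= t <= rt y s m ->
  supp_ge (gre y m t) m /\ rep y (gre y m t) t.
Proof. intros Hp Hs Hk Ht. split; [apply gre_supp|].
  assert (Inv : forall k, 0 <= grem y m t k /\ ((m <= k)%nat -> grem y m t k <= rt y s k)
                        /\ ((k <= m)%nat -> grem y m t k = t)).
  { induction k as [|k IH]; simpl.
    - split; [lra|]. split; [|auto]. intro H. replace m with O in Ht by lia. lra.
    - destruct IH as [I1 [I2 I3]]. destruct (Nat.leb_spec m k).
      + specialize (I2 H). specialize (Hk k H). rewrite rt_S in Hk |- *.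
        destruct (Rle_dec (y k) (grem y m t k)); (split; [lra| split; [intro; lra| intro; lia]]).
      + specialize (I3 ltac:(lia)). split; [lra|]. split.
        * intro. replace (S k) with m by lia. lra.
        * auto. }
  unfold rep. intros eps He. destruct (rt_cv0 y s Hs eps He) as [N HN].
  exists (Nat.max N m). intros n Hn. rewrite gre_psum. unfold R_dist.
  destruct (Inv n) as [I1 [I2 _]]. specialize (I2 ltac:(lia)). specialize (HN n ltac:(lia)).
  rewrite Rabs_left1; lra. Qed.

Ltac bsimpl := repeat (cbn [orb andb negb]; match goal with
 | |- context [Nat.eqb ?a ?b] => destruct (Nat.eqb_spec a b); try lia
 | |- context [Nat.leb ?a ?b] => destruct (Nat.leb_spec a b); try lia
 | |- context [Nat.ltb ?a ?b] => destruct (Nat.ltb_spec a b); try lia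
 end); cbn [orb andb negb].

Definition decr (y : nat -> R) := forall n, y (S n) <= y n.

Lemma decr_le y i j : decr y -> (i <= j)%nat -> y j <= y i.
Proof. intros H Hij. induction Hij; [lra|]. specialize (H m). lra. Qed.

Lemma rep_all y s : ssum y s -> rep y (fun _ => true) s.
Proof. intro H. unfold rep, tm. auto. Qed.

Lemma ach_rep y v : achievement_set y v <-> exists e, rep y e v.
Proof. unfold achievement_set. split; intros [e He]; exists e; apply represents_rep; auto. Qed.

Lemma Nec y s a b : allpos y -> ssum y s -> decr y ->
  (forall v, achievement_set y v <-> a <= v <= b) -> forall n, y n <= rt y s (S n).
Proof. intros Hp Hs Hd HI n. destruct (Rle_or_lt (y n) (rt y s (S n))) as [|Hlt]; auto.
  exfalso. set (w := (y n + rt y s (S n)) / 2).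
  assert (Ha : a <= 0). { apply HI. apply ach_rep. exists (fun _ => false). apply rep_false. }
  assert (Hb : s <= b). { apply HI. apply ach_rep. exists (fun _ => true). apply rep_all; auto. }
  pose proof (rt_nonneg y s (S n) Hp Hs).
  pose proof (term_le_lim y s n (fun i => Rlt_le _ _ (Hp i)) Hs).
  assert (Hw : achievement_set y w). { apply HI. unfold w. lra. }
  apply ach_rep in Hw. destruct Hw as [e He].
  destruct (classic (exists i, (i <= n)%nat /\ e i = true)) as [[i [Hi Hei]]|Hno].
  - pose proof (rep_term_le y e w i Hp He Hei). pose proof (decr_le y i n Hd Hi). unfold w in *. lra.
  - assert (Hs' : supp_ge e (S n)).
    { intros i Hi. destruct (e i) eqn:E; auto. exfalso. apply Hno. exists i. split; [lia|auto]. }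
    pose proof (rep_tail_le y s e w (S n) Hp Hs Hs' He). unfold w in *. lra. Qed.

Definition CR (y : nat -> R) := forall v, achievement_set y v ->
  exists n, In n [1%nat;2%nat;4%nat] /\ has_card (fun e => represents y e v) n.

Lemma card_ge {T} (P : T -> Prop) n L : has_card P n -> NoDup L -> (forall e, In e L -> P e) -> (length L <= n)%nat.
Proof. intros [l [Hl [Hnd HP]]] HL Hin. rewrite <- Hl. apply NoDup_incl_length; auto.
  intros e He. apply HP. auto. Qed.

Lemma card_le {T} (P : T -> Prop) n L : has_card P n -> (forall e, P e -> In e L) -> (n <= length L)%nat.
Proof. intros [l [Hl [Hnd HP]]] Hin. rewrite <- Hl. apply NoDup_incl_length; auto.
  intros e He. apply Hin. apply HP. auto. Qed.

Lemma five_distinct y v e1 e2 e3 e4 e5 : CR y ->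
  rep y e1 v -> rep y e2 v -> rep y e3 v -> rep y e4 v -> rep y e5 v ->
  e1 <> e2 -> e1 <> e3 -> e1 <> e4 -> e1 <> e5 -> e2 <> e3 -> e2 <> e4 -> e2 <> e5 ->
  e3 <> e4 -> e3 <> e5 -> e4 <> e5 -> False.
Proof. intros HC H1 H2 H3 H4 H5; intros.
  destruct (HC v) as [n [Hn Hc]]. { apply ach_rep. eauto. }
  assert (Hnd : NoDup [e1;e2;e3;e4;e5]).
  { repeat constructor; simpl; intuition congruence. }
  pose proof (card_ge _ _ _ Hc Hnd) as Hge.
  assert (5 <= n)%nat.
  { apply Hge. intros e He. simpl in He. apply represents_rep.
    intuition (subst; auto). }
  simpl in Hn. lia. Qed.

Lemma exact3 y v e1 e2 e3 : CR y -> rep y e1 v -> rep y e2 v -> rep y e3 v ->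
  e1 <> e2 -> e1 <> e3 -> e2 <> e3 ->
  (forall e, rep y e v -> e = e1 \/ e = e2 \/ e = e3) -> False.
Proof. intros HC H1 H2 H3 N12 N13 N23 Hcov.
  destruct (HC v) as [n [Hn Hc]]. { apply ach_rep. eauto. }
  assert (Hnd : NoDup [e1;e2;e3]). { repeat constructor; simpl; intuition congruence. }
  pose proof (card_ge _ _ _ Hc Hnd) as Hge.
  assert (3 <= n)%nat.
  { apply Hge. intros e He. simpl in He. apply represents_rep. intuition (subst; auto). }
  pose proof (card_le _ _ [e1;e2;e3] Hc) as Hle.
  assert (n <= 3)%nat.
  { apply Hle. intros e He. apply represents_rep in He. apply Hcov in He. simpl. intuition. }
  simpl in Hn. lia. Qed.

Lemma neq_at (e f : nat -> bool) i : e i <> f i -> e <> f.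
Proof. intros H Heq. apply H. rewrite Heq. auto. Qed.

Lemma disj_sing a f : f a = false -> disj (sing a) f.
Proof. intros H i Hi. unfold sing in Hi. apply Nat.eqb_eq in Hi. subst. auto. Qed.

Lemma disj_supp a f m : (a < m)%nat -> supp_ge f m -> disj (sing a) f.
Proof. intros H1 H2. apply disj_sing. apply H2. auto. Qed.

Lemma pick_overlap y s : allpos y -> ssum y s ->
  (forall M, exists n, (M <= n)%nat /\ y n < rt y s (S n)) ->
  forall M d, 0 < d -> exists n, (M <= n)%nat /\ y n < rt y s (S n) /\ y n <= d.
Proof. intros Hp Hs Hinf M d Hd. destruct (y_small y s Hp Hs d Hd) as [N0 HN0].
  destruct (Hinf (Nat.max M N0)) as [n [Hn1 Hn2]]. exists n. split; [lia|]. split; auto.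
  specialize (HN0 n ltac:(lia)). lra. Qed.

Lemma claimA y s a b : allpos y -> ssum y s -> decr y ->
  (forall v, achievement_set y v <-> a <= v <= b) -> CR y ->
  (forall M, exists n, (M <= n)%nat /\ y n < rt y s (S n)) -> False.
Proof. intros Hp Hs Hd HI HC Hinf.
  pose proof (Nec y s a b Hp Hs Hd HI) as HK.
  assert (KK : forall m t, 0 <= t <= rt y s m -> supp_ge (gre y m t) m /\ rep y (gre y m t) t).
  { intros m t Ht. apply (kakeya y s); auto. }
  pose proof (pick_overlap y s Hp Hs Hinf) as PK.
  destruct (PK O 1 ltac:(lra)) as [n1 [_ [o1 _]]].
  set (d1 := rt y s (S n1) - y n1).
  destruct (PK (S n1) (d1/3) ltac:(unfold d1; lra)) as [n2 [l2 [o2 s2]]].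
  set (d2 := rt y s (S n2) - y n2).
  assert (m12 : 0 < Rmin d1 d2) by (apply Rmin_pos; unfold d1, d2; lra).
  destruct (PK (S n2) (Rmin d1 d2/3) ltac:(lra)) as [n3 [l3 [o3 s3]]].
  set (d3 := rt y s (S n3) - y n3).
  assert (m123 : 0 < Rmin (Rmin d1 d2) d3) by (apply Rmin_pos; unfold d3; lra).
  destruct (PK (S n3) (Rmin (Rmin d1 d2) d3/3) ltac:(lra)) as [n4 [l4 [o4 s4]]].
  pose proof (Rmin_l d1 d2). pose proof (Rmin_r d1 d2).
  pose proof (Rmin_l (Rmin d1 d2) d3). pose proof (Rmin_r (Rmin d1 d2) d3).
  pose proof (Hp n1). pose proof (Hp n2). pose proof (Hp n3). pose proof (Hp n4).
  set (r4 := y n4). set (r3 := y n3 + r4). set (r2 := y n2 + r3). set (v := y n1 + r2).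
  destruct (KK (S n1) v) as [S1 R1]. { unfold v, r2, r3, r4, d1 in *. lra. }
  destruct (KK (S n2) r2) as [S2 R2]. { unfold r2, r3, r4, d2 in *. lra. }
  destruct (KK (S n3) r3) as [S3 R3]. { unfold r3, r4, d3 in *. lra. }
  destruct (KK (S n4) r4) as [S4 R4]. { unfold r4 in *. lra. }
  set (E0 := uni (sing n1) (uni (sing n2) (uni (sing n3) (sing n4)))).
  set (E1 := gre y (S n1) v).
  set (E2 := uni (sing n1) (gre y (S n2) r2)).
  set (E3 := uni (sing n1) (uni (sing n2) (gre y (S n3) r3))).
  set (E4 := uni (sing n1) (uni (sing n2) (uni (sing n3) (gre y (S n4) r4)))).
  assert (Q0 : rep y E0 v).
  { unfold E0, v, r2, r3, r4. apply rep_union; [apply disj_sing; unfold uni, sing; bsimpl; auto|apply rep_sing|].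
    apply rep_union; [apply disj_sing; unfold uni, sing; bsimpl; auto|apply rep_sing|].
    apply rep_union; [apply disj_sing; unfold uni, sing; bsimpl; auto|apply rep_sing|apply rep_sing]. }
  assert (Q2 : rep y E2 v).
  { unfold E2, v. apply rep_union; [apply (disj_supp _ _ (S n2)); auto; lia|apply rep_sing|auto]. }
  assert (Q3 : rep y E3 v).
  { unfold E3, v, r2. apply rep_union.
    - apply disj_sing. unfold uni, sing. bsimpl. apply S3. lia.
    - apply rep_sing.
    - apply rep_union; [apply (disj_supp _ _ (S n3)); auto; lia|apply rep_sing|auto]. }
  assert (Q4 : rep y E4 v).
  { unfold E4, v, r2, r3. apply rep_union.
    - apply disj_sing. unfold uni, sing. bsimpl. apply S4. lia.
    - apply rep_sing.
    - apply rep_union.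
      + apply disj_sing. unfold uni, sing. bsimpl. apply S4. lia.
      + apply rep_sing.
      + apply rep_union; [apply (disj_supp _ _ (S n4)); auto; lia|apply rep_sing|auto]. }
  assert (G1 : forall i, (i < S n1)%nat -> E1 i = false) by (intros; apply S1; auto).
  assert (G2 : forall i, (i < S n2)%nat -> gre y (S n2) r2 i = false) by (intros; apply S2; auto).
  assert (G3 : forall i, (i < S n3)%nat -> gre y (S n3) r3 i = false) by (intros; apply S3; auto).
  assert (G4 : forall i, (i < S n4)%nat -> gre y (S n4) r4 i = false) by (intros; apply S4; auto).
  apply (five_distinct y v E0 E1 E2 E3 E4 HC Q0 R1 Q2 Q3 Q4).
  - apply (neq_at _ _ n1). rewrite G1 by lia. unfold E0, uni, sing. bsimpl; congruence.
  - apply (neq_at _ _ n2). unfold E2, E0, uni, sing. rewrite G2 by lia. bsimpl; congruence.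
  - apply (neq_at _ _ n3). unfold E3, E0, uni, sing. rewrite G3 by lia. bsimpl; congruence.
  - apply (neq_at _ _ n4). unfold E4, E0, uni, sing. rewrite G4 by lia. bsimpl; congruence.
  - apply (neq_at _ _ n1). rewrite G1 by lia. unfold E2, uni, sing. bsimpl; congruence.
  - apply (neq_at _ _ n1). rewrite G1 by lia. unfold E3, uni, sing. bsimpl; congruence.
  - apply (neq_at _ _ n1). rewrite G1 by lia. unfold E4, uni, sing. bsimpl; congruence.
  - apply (neq_at _ _ n2). unfold E2, E3, uni, sing. rewrite G2 by lia. bsimpl; congruence.
  - apply (neq_at _ _ n2). unfold E2, E4, uni, sing. rewrite G2 by lia. bsimpl; congruence.
  - apply (neq_at _ _ n3). unfold E3, E4, uni, sing. rewrite G3 by lia. bsimpl; congruence.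
Qed.

Lemma least (P : nat -> Prop) : (exists n, P n) -> exists n, P n /\ forall m, (m < n)%nat -> ~ P m.
Proof. intros [n Hn]. revert Hn. induction n as [n IH] using lt_wf_ind. intro Hn.
  destruct (classic (exists m, (m < n)%nat /\ P m)) as [[m [Hm1 Hm2]]|Hno].
  - apply (IH m Hm1 Hm2).
  - exists n. split; auto. intros m Hm HP. apply Hno. eauto. Qed.

Lemma lastb (f : nat -> bool) (b : bool) K i0 : (forall i, (K < i)%nat -> f i = b) -> f i0 = negb b ->
  exists k, (i0 <= k)%nat /\ f k = negb b /\ forall i, (k < i)%nat -> f i = b.
Proof. revert i0. induction K as [|K IH]; intros i0 H1 H2.
  - exists O. assert (i0 = O). { destruct i0; auto. rewrite H1 in H2 by lia. destruct b; discriminate. }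
    subst. split; auto.
  - destruct (Bool.bool_dec (f (S K)) b) as [E|E].
    + apply IH; auto. intros i Hi. destruct (Nat.eq_dec i (S K)); [subst; auto|]. apply H1; lia.
    + exists (S K). split.
      * destruct (le_lt_dec i0 (S K)); auto. rewrite H1 in H2 by lia. destruct b; discriminate.
      * split; [destruct b, (f (S K)); simpl; congruence|auto]. Qed.

Definition Zs (e : nat -> bool) k := forall i, (k < i)%nat -> e i = false.
Definition Os (e : nat -> bool) k := forall i, (k < i)%nat -> e i = true.

Lemma ZO e k k' : Zs e k -> Os e k' -> False.
Proof. intros H1 H2. specialize (H1 (S (Nat.max k k')) ltac:(lia)). rewrite H2 in H1 by lia. discriminate. Qed.

Definition binf (y : nat -> R) s N := forall n, (N <= n)%nat -> y n = rt y s (S n).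

Lemma psum_ext_lt f g n : (forall i, (i < n)%nat -> f i = g i) -> psum f n = psum g n.
Proof. induction n; intros H; simpl; auto. rewrite IHn, H; auto. Qed.

Lemma bl_core y s N a b v k : allpos y -> ssum y s -> binf y s N -> rep y a v -> rep y b v ->
  (N <= k)%nat -> a k = true -> b k = false -> (forall i, (i < k)%nat -> a i = b i) ->
  Zs a k /\ Os b k.
Proof. intros Hp Hs Hb Ha Hbb Hk Hak Hbk Hlt.
  assert (HP : psum (tm y a) k = psum (tm y b) k).
  { apply psum_ext_lt. intros i Hi. unfold tm. rewrite Hlt; auto. }
  pose proof (ssum_shift _ _ (S k) Ha) as Ha'. pose proof (ssum_shift _ _ (S k) Hbb) as Hb'.
  pose proof (ssum_shift _ _ (S k) Hs) as Hy'.
  simpl psum in Ha', Hb', Hy'.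
  replace (tm y a k) with (y k) in Ha' by (unfold tm; rewrite Hak; auto).
  replace (tm y b k) with 0 in Hb' by (unfold tm; rewrite Hbk; auto).
  rewrite HP in Ha'.
  set (P := psum (tm y b) k) in *.
  assert (Hrt : s - (psum y k + y k) = y k). { pose proof (Hb k Hk) as E0. unfold rt in E0. simpl in E0. lra. }
  rewrite Hrt in Hy'.
  assert (L1 : v - (P + 0) <= y k).
  { refine (ssum_le _ _ _ _ _ Hb' Hy'). intro i. unfold tm. specialize (Hp (S k + i)%nat). destruct (b (S k + i)%nat); lra. }
  assert (L2 : 0 <= v - (P + y k)).
  { apply (ssum_nonneg _ _ (fun i => tm_nonneg y a Hp (S k + i)) Ha'). }
  assert (E : v - (P + y k) = 0) by lra. rewrite E in Ha'.
  split.
  - intros i Hi. pose proof (ssum_zero _ (i - S k) (fun j => tm_nonneg y a Hp (S k + j)) Ha') as Z.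
    cbv beta in Z. replace (S k + (i - S k))%nat with i in Z by lia. unfold tm in Z. destruct (a i); auto.
    specialize (Hp i). lra.
  - intros i Hi. pose proof (ssum_minus _ _ _ _ Hy' Hb') as D.
    replace (y k - (v - (P + 0))) with 0 in D by lra.
    assert (Dn : forall j, 0 <= y (S k + j)%nat - tm y b (S k + j)%nat).
    { intro j. unfold tm. specialize (Hp (S k + j)%nat). destruct (b (S k + j)%nat); lra. }
    pose proof (ssum_zero _ (i - S k) Dn D) as Z. cbv beta in Z. replace (S k + (i - S k))%nat with i in Z by lia.
    unfold tm in Z. destruct (b i) eqn:Eb; auto. specialize (Hp i). lra. Qed.

Lemma BL y s N a b v : allpos y -> ssum y s -> binf y s N -> supp_ge a N -> supp_ge b N ->
  rep y a v -> rep y b v -> a <> b ->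
  exists k, (Zs a k /\ Os b k) \/ (Os a k /\ Zs b k).
Proof. intros Hp Hs Hb Sa Sb Ra Rb Hne.
  assert (Hex : exists i, a i <> b i).
  { apply NNPP. intro Hno. apply Hne. apply functional_extensionality. intro i.
    apply NNPP. intro H. apply Hno. eauto. }
  destruct (least _ Hex) as [k [Hk Hmin]].
  assert (Hlt : forall i, (i < k)%nat -> a i = b i).
  { intros i Hi. apply NNPP. apply Hmin; auto. }
  assert (HkN : (N <= k)%nat).
  { destruct (le_lt_dec N k); auto. exfalso. apply Hk. rewrite Sa, Sb; auto. }
  exists k. destruct (a k) eqn:Ak.
  - left. apply (bl_core y s N a b v k); auto. destruct (b k); congruence.
  - right. destruct (bl_core y s N b a v k) as [X Y]; auto.
    + destruct (b k); congruence.
    + intros i Hi. symmetry; auto. Qed.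

Lemma TD y s N a b c v : allpos y -> ssum y s -> binf y s N -> supp_ge a N -> supp_ge b N -> supp_ge c N ->
  rep y a v -> rep y b v -> rep y c v -> a <> b -> a <> c -> b <> c -> False.
Proof. intros Hp Hs Hb Sa Sb Sc Ra Rb Rc Nab Nac Nbc.
  destruct (BL y s N a b v) as [k1 [[Z1 O1]|[O1 Z1]]]; auto;
  destruct (BL y s N a c v) as [k2 [[Z2 O2]|[O2 Z2]]]; auto;
  destruct (BL y s N b c v) as [k3 [[Z3 O3]|[O3 Z3]]]; auto;
  eauto using ZO.
Qed.

Lemma minN y s : (forall n, y n <= rt y s (S n)) -> forall M0, binf y s M0 ->
  exists N, binf y s N /\ (N = O \/ exists M, N = S M /\ y M < rt y s (S M)).
Proof. intros HK M0. induction M0 as [|M0 IH]; intros Hb.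
  - exists O. auto.
  - destruct (Req_dec (y M0) (rt y s (S M0))) as [E|E].
    + apply IH. intros n Hn. destruct (Nat.eq_dec n M0); [subst; auto|]. apply Hb. lia.
    + exists (S M0). split; auto. right. exists M0. split; auto. specialize (HK M0). lra. Qed.

Definition del (e : nat -> bool) M : nat -> bool := fun i => if Nat.eqb i M then false else e i.

Lemma split_sing e M : e M = true -> e = uni (sing M) (del e M) /\ disj (sing M) (del e M).
Proof. intro H. split.
  - apply functional_extensionality. intro i. unfold uni, sing, del.
    destruct (Nat.eqb_spec i M); subst; auto.
  - apply disj_sing. unfold del. rewrite Nat.eqb_refl. auto. Qed.

Lemma rep_tset_bin y s N j : ssum y s -> binf y s N -> (N <= j)%nat -> rep y (tset j) (y j).
Proof. intros Hs Hb Hj. rewrite (Hb j Hj). apply rep_tset; auto. Qed.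

Lemma exists_j (a b : nat) : exists j, (b <= j)%nat /\ (a <= j)%nat.
Proof. exists (Nat.max a b). lia. Qed.

Lemma case_m2 y s M M' : allpos y -> ssum y s -> CR y -> (forall n, y n <= rt y s (S n)) ->
  binf y s (S M) -> y M < rt y s (S M) -> M = S M' -> y M' = y M -> False.
Proof. intros Hp Hs HC HK Hb Hlt HM HM'.
  destruct (y_small y s Hp Hs (rt y s (S M) - y M) ltac:(lra)) as [N0 HN0].
  destruct (exists_j N0 (S M)) as [j [Hj Hj2]].
  specialize (HN0 j Hj2). pose proof (Hp j).
  set (v := y M + y j).
  destruct (kakeya y s (S M) v Hp Hs (fun n _ => HK n)) as [S5 R5].
  { unfold v. pose proof (Hp M). lra. }
  assert (R1 : rep y (uni (sing M) (sing j)) v).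
  { apply rep_union; [apply disj_sing; unfold sing; bsimpl; auto|apply rep_sing|apply rep_sing]. }
  assert (R2 : rep y (uni (sing M') (sing j)) v).
  { unfold v. rewrite <- HM'. apply rep_union; [apply disj_sing; unfold sing; bsimpl; auto|apply rep_sing|apply rep_sing]. }
  assert (R3 : rep y (uni (sing M) (tset j)) v).
  { apply rep_union; [apply disj_sing; unfold tset; bsimpl; auto|apply rep_sing|apply (rep_tset_bin y s (S M)); auto]. }
  assert (R4 : rep y (uni (sing M') (tset j)) v).
  { unfold v. rewrite <- HM'. apply rep_union; [apply disj_sing; unfold tset; bsimpl; auto|apply rep_sing|apply (rep_tset_bin y s (S M)); auto]. }
  assert (G5 : forall i, (i < S M)%nat -> gre y (S M) v i = false) by (intros; apply S5; auto).
  apply (five_distinct y v _ _ _ _ _ HC R1 R2 R3 R4 R5).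
  - apply (neq_at _ _ M). unfold uni, sing, tset. bsimpl; congruence.
  - apply (neq_at _ _ (S j)). unfold uni, sing, tset. bsimpl; congruence.
  - apply (neq_at _ _ M). unfold uni, sing, tset. bsimpl; congruence.
  - apply (neq_at _ _ M). rewrite G5 by lia. unfold uni, sing, tset. bsimpl; congruence.
  - apply (neq_at _ _ M). unfold uni, sing, tset. bsimpl; congruence.
  - apply (neq_at _ _ (S j)). unfold uni, sing, tset. bsimpl; congruence.
  - apply (neq_at _ _ M'). rewrite G5 by lia. unfold uni, sing, tset. bsimpl; congruence.
  - apply (neq_at _ _ M). unfold uni, sing, tset. bsimpl; congruence.
  - apply (neq_at _ _ M). rewrite G5 by lia. unfold uni, sing, tset. bsimpl; congruence.
  - apply (neq_at _ _ M'). rewrite G5 by lia. unfold uni, sing, tset. bsimpl; congruence.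
Qed.

Lemma low_false y e v M : allpos y -> rep y e v -> (forall i, (i < M)%nat -> v < y i) ->
  forall i, (i < M)%nat -> e i = false.
Proof. intros Hp He H i Hi. destruct (e i) eqn:E; auto. pose proof (rep_term_le y e v i Hp He E).
  specialize (H i Hi). lra. Qed.

Lemma case_m1a y s M : allpos y -> ssum y s -> CR y -> binf y s (S M) ->
  (forall i, (i < M)%nat -> y M < y i) ->
  forall a0 b0, supp_ge a0 (S M) -> supp_ge b0 (S M) -> rep y a0 (y M) -> rep y b0 (y M) -> a0 <> b0 -> False.
Proof. intros Hp Hs HC Hb Hbig a0 b0 Sa Sb Ra Rb Nab.
  apply (exact3 y (y M) (sing M) a0 b0 HC (rep_sing y M) Ra Rb); auto.
  - apply (neq_at _ _ M). rewrite Sa by lia. unfold sing. rewrite Nat.eqb_refl. congruence.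
  - apply (neq_at _ _ M). rewrite Sb by lia. unfold sing. rewrite Nat.eqb_refl. congruence.
  - intros e He. pose proof (low_false y e (y M) M Hp He Hbig) as Hlow.
    destruct (e M) eqn:EM.
    + left. destruct (split_sing e M EM) as [Eq Hd]. rewrite Eq in He.
      pose proof (rep_diff y _ _ _ _ Hd He (rep_sing y M)) as Hz.
      replace (y M - y M) with 0 in Hz by ring.
      apply functional_extensionality. intro i. unfold sing. destruct (Nat.eqb_spec i M).
      * subst; auto.
      * pose proof (rep_zero y _ i Hp Hz) as Zi. unfold del in Zi.
        destruct (Nat.eqb_spec i M); [lia|auto].
    + assert (Se : supp_ge e (S M)).
      { intros i Hi. destruct (Nat.eq_dec i M); [subst; auto|apply Hlow; lia]. }
      right. destruct (classic (e = a0)) as [|Na]; [left; auto|].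
      destruct (classic (e = b0)) as [|Nb]; [right; auto|].
      exfalso. apply (TD y s (S M) e a0 b0 (y M) Hp Hs Hb Se Sa Sb He Ra Rb Na Nb Nab). Qed.

Lemma case_m1b y s M : allpos y -> ssum y s -> decr y -> CR y -> (forall n, y n <= rt y s (S n)) ->
  binf y s (S M) -> y M < rt y s (S M) ->
  (forall i, (i < M)%nat -> y M < y i) ->
  (forall a0 b0, supp_ge a0 (S M) -> supp_ge b0 (S M) -> rep y a0 (y M) -> rep y b0 (y M) -> a0 = b0) ->
  False.
Proof. intros Hp Hs Hd HC HK Hb Hlt Hbig Hu.
  pose proof (Hp M) as HpM.
  destruct (kakeya y s (S M) (y M) Hp Hs (fun n _ => HK n)) as [SR RR]. { lra. }
  set (R := gre y (S M) (y M)) in *.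
  assert (ZeroInf : forall K, exists i, (K < i)%nat /\ R i = false).
  { intro K. apply NNPP. intro Hno.
    assert (HT : forall i, (K < i)%nat -> R i = true).
    { intros i Hi. destruct (R i) eqn:E; auto. exfalso. apply Hno. eauto. }
    assert (Hi0 : exists i0, (S M <= i0)%nat /\ R i0 = false).
    { apply NNPP. intro Hno2.
      assert (ER : R = tset M).
      { apply functional_extensionality. intro i. unfold tset. destruct (Nat.ltb_spec M i).
        - destruct (R i) eqn:E; auto. exfalso. apply Hno2. exists i. split; auto.
        - apply SR. lia. }
      rewrite ER in RR. pose proof (rep_unique _ _ _ _ RR (rep_tset y s M Hs)). lra. }
    destruct Hi0 as [i0 [Hi0 Ri0]].
    destruct (lastb R true K i0 HT Ri0) as [k [Hk1 [Rk Hk2]]].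
    set (Q := fun i => if Nat.ltb k i then false else R i).
    assert (EQ : R = uni (tset k) Q).
    { apply functional_extensionality. intro i. unfold uni, tset, Q.
      destruct (Nat.ltb_spec k i); simpl; auto. }
    assert (DQ : disj (tset k) Q).
    { intros i Hi. unfold tset in Hi. unfold Q. rewrite Hi. auto. }
    rewrite EQ in RR. pose proof (rep_diff y _ _ _ _ DQ RR (rep_tset y s k Hs)) as RQ.
    assert (DQ2 : disj (sing k) Q). { apply disj_sing. unfold Q. rewrite Nat.ltb_irrefl. auto. }
    pose proof (rep_union y _ _ _ _ DQ2 (rep_sing y k) RQ) as RR'.
    rewrite (Hb k ltac:(lia)) in RR'. replace (rt y s (S k) + (y M - rt y s (S k))) with (y M) in RR' by ring.
    assert (SR' : supp_ge (uni (sing k) Q) (S M)).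
    { intros i Hi. unfold uni, sing, Q. destruct (Nat.eqb_spec i k); [lia|].
      destruct (Nat.ltb_spec k i); [lia|]. simpl. apply SR. auto. }
    assert (SR2 : supp_ge (uni (tset k) Q) (S M)) by (rewrite <- EQ; auto).
    pose proof (Hu _ _ SR2 SR' RR RR') as Heq.
    pose proof (f_equal (fun e => e (S k)) Heq) as Hx. cbv beta in Hx.
    unfold uni, tset, sing, Q in Hx. revert Hx. bsimpl; congruence. }
  assert (OneInf : forall K, exists i, (K < i)%nat /\ R i = true).
  { intro K. apply NNPP. intro Hno.
    assert (HF : forall i, (K < i)%nat -> R i = false).
    { intros i Hi. destruct (R i) eqn:E; auto. exfalso. apply Hno. eauto. }
    assert (Hi0 : exists i0, R i0 = true).
    { apply NNPP. intro Hno2.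
      assert (ER : R = (fun _ => false)).
      { apply functional_extensionality. intro i. destruct (R i) eqn:E; auto. exfalso. eauto. }
      rewrite ER in RR. pose proof (rep_unique _ _ _ _ RR (rep_false y)). lra. }
    destruct Hi0 as [i0 Ri0].
    destruct (lastb R false K i0 HF Ri0) as [k [Hk1 [Rk Hk2]]]. simpl in Rk.
    assert (HkM : (S M <= k)%nat). { destruct (le_lt_dec (S M) k); auto. rewrite SR in Rk by lia. discriminate. }
    destruct (split_sing R k Rk) as [EQ DQ].
    set (Q := del R k) in *.
    rewrite EQ in RR. pose proof (rep_diff y _ _ _ _ DQ RR (rep_sing y k)) as RQ.
    assert (DQ2 : disj (tset k) Q).
    { intros i Hi. unfold tset in Hi. apply Nat.ltb_lt in Hi. unfold Q, del.
      destruct (Nat.eqb_spec i k); [lia|]. apply Hk2. auto. }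
    pose proof (rep_union y _ _ _ _ DQ2 (rep_tset y s k Hs) RQ) as RR'.
    rewrite <- (Hb k ltac:(lia)) in RR'. replace (y k + (y M - y k)) with (y M) in RR' by ring.
    assert (SR' : supp_ge (uni (tset k) Q) (S M)).
    { intros i Hi. unfold uni, tset, Q, del. destruct (Nat.ltb_spec k i); [lia|].
      destruct (Nat.eqb_spec i k); [lia|]. simpl. apply SR. auto. }
    assert (SR2 : supp_ge (uni (sing k) Q) (S M)) by (rewrite <- EQ; auto).
    pose proof (Hu _ _ SR2 SR' RR RR') as Heq.
    pose proof (f_equal (fun e => e (S k)) Heq) as Hx. cbv beta in Hx.
    unfold uni, tset, sing, Q, del in Hx. revert Hx. bsimpl. rewrite Hk2 by lia. congruence. }
  assert (Hdel : exists d0, 0 < d0 /\ forall i, (i < M)%nat -> y M + d0 <= y i).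
  { destruct M as [|M''].
    - exists 1. split; [lra|]. intros; lia.
    - exists (y M'' - y (S M'')). split; [specialize (Hbig M'' ltac:(lia)); lra|].
      intros i Hi. pose proof (decr_le y i M'' Hd ltac:(lia)). lra. }
  destruct Hdel as [d0 [Hd0 Hd0']].
  destruct (y_small y s Hp Hs d0 Hd0) as [N0 HN0].
  destruct (ZeroInf (Nat.max N0 (S M))) as [j [Hj Rj]].
  specialize (HN0 j ltac:(lia)). pose proof (Hp j).
  set (v := y M + y j).
  assert (T1 : rep y (uni (sing M) (sing j)) v).
  { apply rep_union; [apply disj_sing; unfold sing; bsimpl; auto|apply rep_sing|apply rep_sing]. }
  assert (T2 : rep y (uni (sing M) (tset j)) v).
  { apply rep_union; [apply disj_sing; unfold tset; bsimpl; auto|apply rep_sing|apply (rep_tset_bin y s (S M)); auto; lia]. }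
  assert (T3 : rep y (uni R (sing j)) v).
  { apply rep_union; [|auto|apply rep_sing]. intros i Hi. unfold sing.
    destruct (Nat.eqb_spec i j); subst; auto. congruence. }
  assert (RM : R M = false) by (apply SR; lia).
  apply (exact3 y v _ _ _ HC T1 T2 T3).
  - apply (neq_at _ _ (S j)). unfold uni, sing, tset. bsimpl; congruence.
  - apply (neq_at _ _ M). unfold uni, sing, tset. rewrite RM. bsimpl; congruence.
  - apply (neq_at _ _ M). unfold uni, sing, tset. rewrite RM. bsimpl; congruence.
  - intros e He.
    assert (Hlow : forall i, (i < M)%nat -> e i = false).
    { apply (low_false y e v M Hp He). intros i Hi. specialize (Hd0' i Hi). unfold v. lra. }
    destruct (e M) eqn:EM.
    + destruct (split_sing e M EM) as [Eq Hdj]. rewrite Eq in He.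
      pose proof (rep_diff y _ _ _ _ Hdj He (rep_sing y M)) as Hz.
      replace (v - y M) with (y j) in Hz by (unfold v; ring).
      assert (Sz : supp_ge (del e M) (S M)).
      { intros i Hi. unfold del. destruct (Nat.eqb_spec i M); auto. apply Hlow. lia. }
      assert (Ssj : supp_ge (sing j) (S M)). { intros i Hi. unfold sing. bsimpl; auto. }
      assert (Stj : supp_ge (tset j) (S M)). { intros i Hi. unfold tset. bsimpl; auto. }
      assert (Nst : sing j <> tset j). { apply (neq_at _ _ j). unfold sing, tset. bsimpl; congruence. }
      destruct (classic (del e M = sing j)) as [E1|N1].
      * left. rewrite Eq, E1. auto.
      * destruct (classic (del e M = tset j)) as [E2|N2].
        -- right; left. rewrite Eq, E2. auto.
        -- exfalso. apply (TD y s (S M) _ _ _ (y j) Hp Hs Hb Sz Ssj Stj Hz (rep_sing y j)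
              (rep_tset_bin y s (S M) j Hs Hb ltac:(lia)) N1 N2 Nst).
    + assert (Se : supp_ge e (S M)).
      { intros i Hi. destruct (Nat.eq_dec i M); [subst; auto|apply Hlow; lia]. }
      right; right. apply NNPP. intro Ne.
      assert (S3 : supp_ge (uni R (sing j)) (S M)).
      { intros i Hi. unfold uni, sing. rewrite SR by auto. bsimpl; auto. }
      destruct (BL y s (S M) e _ v Hp Hs Hb Se S3 He T3 Ne) as [k [[Z1 O1]|[O1 Z1]]].
      * destruct (ZeroInf (Nat.max k j)) as [i [Hi Ri]]. specialize (O1 i ltac:(lia)).
        unfold uni, sing in O1. rewrite Ri in O1. revert O1. bsimpl; congruence.
      * destruct (OneInf k) as [i [Hi Ri]]. specialize (Z1 i Hi).
        unfold uni in Z1. rewrite Ri in Z1. discriminate.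
Qed.

Theorem sorted_main y s a b : allpos y -> ssum y s -> decr y ->
  (forall v, achievement_set y v <-> a <= v <= b) -> CR y ->
  (exists v, has_card (fun e => represents y e v) 4) -> False.
Proof. intros Hp Hs Hd HI HC H4.
  pose proof (Nec y s a b Hp Hs Hd HI) as HK.
  destruct (classic (forall M, exists n, (M <= n)%nat /\ y n < rt y s (S n))) as [Hinf|Hfin].
  { apply (claimA y s a b); auto. }
  apply not_all_ex_not in Hfin. destruct Hfin as [M0 HM0].
  assert (Hb0 : binf y s M0).
  { intros n Hn. specialize (HK n). destruct (Rle_lt_or_eq_dec _ _ HK); auto.
    exfalso. apply HM0. eauto. }
  destruct (minN y s HK M0 Hb0) as [N [HbN [HN0|[M [HNM Hlt]]]]].
  - subst N. destruct H4 as [v [l [Hl [Hnd HP]]]].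
    destruct l as [|e1 [|e2 [|e3 l']]]; simpl in Hl; try lia.
    inversion Hnd as [|? ? Hn1 Hnd2]; subst. inversion Hnd2 as [|? ? Hn2 Hnd3]; subst.
    assert (R1 : rep y e1 v) by (apply represents_rep, HP; simpl; auto).
    assert (R2 : rep y e2 v) by (apply represents_rep, HP; simpl; auto).
    assert (R3 : rep y e3 v) by (apply represents_rep, HP; simpl; auto).
    assert (Z : forall e : nat -> bool, supp_ge e 0) by (intros e i Hi; lia).
    apply (TD y s 0 e1 e2 e3 v Hp Hs HbN (Z _) (Z _) (Z _) R1 R2 R3).
    + intro E; apply Hn1; subst; simpl; auto.
    + intro E; apply Hn1; subst; simpl; auto.
    + intro E; apply Hn2; subst; simpl; auto.
  - subst N. destruct (classic (exists M', M = S M' /\ y M' = y M)) as [[M' [E1 E2]]|Hno].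
    + apply (case_m2 y s M M'); auto.
    + assert (Hbig : forall i, (i < M)%nat -> y M < y i).
      { intros i Hi. destruct M as [|M']; [lia|].
        pose proof (decr_le y i M' Hd ltac:(lia)). pose proof (Hd M').
        destruct (Req_dec (y M') (y (S M'))) as [E|E].
        - exfalso. apply Hno. exists M'. auto.
        - lra. }
      destruct (classic (exists a0 b0, supp_ge a0 (S M) /\ supp_ge b0 (S M) /\ rep y a0 (y M) /\ rep y b0 (y M) /\ a0 <> b0))
        as [[a0 [b0 [Sa [Sb [Ra [Rb Nab]]]]]]|Hno2].
      * apply (case_m1a y s M Hp Hs HC HbN Hbig a0 b0); auto.
      * apply (case_m1b y s M Hp Hs Hd HC HK HbN Hlt Hbig).
        intros a0 b0 Sa Sb Ra Rb. apply NNPP. intro Nab. apply Hno2. exists a0, b0. auto.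
Qed.

Definition lsum (a : nat -> R) (L : list nat) : R := fold_right (fun i acc => a i + acc) 0 L.

Lemma lsum_app a L1 L2 : lsum a (L1 ++ L2) = lsum a L1 + lsum a L2.
Proof. induction L1; simpl; [ring|]. rewrite IHL1. ring. Qed.

Lemma lsum_map a f L : lsum a (map f L) = lsum (fun k => a (f k)) L.
Proof. induction L; simpl; auto. rewrite IHL; auto. Qed.

Lemma psum_lsum a n : psum a n = lsum a (seq 0 n).
Proof. induction n; [reflexivity|]. change (psum a (S n)) with (psum a n + a n). rewrite seq_S, lsum_app, IHn. simpl. ring. Qed.

Lemma lsum_nonneg a L : (forall i, 0 <= a i) -> 0 <= lsum a L.
Proof. intro H; induction L; simpl; [lra|]. specialize (H a0). lra. Qed.

Lemma lsum_sub a L' : (forall i, 0 <= a i) -> forall L, NoDup L -> incl L L' -> lsum a L <= lsum a L'.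
Proof. intro Ha. induction L' as [|z L'' IH]; intros L Hnd Hinc.
  - destruct L as [|w L]; [simpl; lra|]. exfalso. apply (Hinc w); simpl; auto.
  - simpl. destruct (in_dec Nat.eq_dec z L) as [Hz|Hz].
    + apply in_split in Hz. destruct Hz as [L1 [L2 E]]. subst L.
      rewrite lsum_app. simpl.
      assert (H1 : lsum a (L1 ++ L2) <= lsum a L'').
      { apply IH. apply (NoDup_remove_1 _ _ _ Hnd).
        intros w Hw. pose proof (NoDup_remove_2 _ _ _ Hnd) as Hn.
        assert (In w (z :: L'')) by (apply Hinc; apply in_app_or in Hw; apply in_or_app; simpl; tauto).
        destruct H; [subst; contradiction|auto]. }
      rewrite lsum_app in H1. lra.
    + assert (lsum a L <= lsum a L'').
      { apply IH; auto. intros w Hw. pose proof (Hinc w Hw) as H. destruct H; [subst; contradiction|auto]. }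
      specialize (Ha z). lra. Qed.

Lemma list_bound (L : list nat) : exists K, forall i, In i L -> (i < K)%nat.
Proof. induction L as [|z L [K HK]]; [exists O; simpl; tauto|].
  exists (S (Nat.max z K)). intros i [E|Hi]; [subst; lia|]. specialize (HK i Hi). lia. Qed.

Lemma psum_reidx_le a f n : (forall i, 0 <= a i) -> (forall i j, f i = f j -> i = j) ->
  exists K, psum (fun k => a (f k)) n <= psum a K.
Proof. intros Ha Hf. destruct (list_bound (map f (seq 0 n))) as [K HK]. exists K.
  rewrite !psum_lsum, <- lsum_map. apply lsum_sub; auto.
  - apply Injective_map_NoDup; [intros i j; apply Hf|apply seq_NoDup].
  - intros i Hi. apply in_seq. specialize (HK i Hi). lia. Qed.

Lemma rearr a l f g : (forall i, 0 <= a i) -> (forall i, f (g i) = i) -> (forall k, g (f k) = k) ->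
  ssum a l -> ssum (fun k => a (f k)) l.
Proof. intros Ha Hfg Hgf Hs.
  assert (Hfi : forall i j, f i = f j -> i = j). { intros i j E. rewrite <- (Hgf i), <- (Hgf j), E. auto. }
  assert (Hgi : forall i j, g i = g j -> i = j). { intros i j E. rewrite <- (Hfg i), <- (Hfg j), E. auto. }
  assert (Hb : forall n, psum (fun k => a (f k)) n <= l).
  { intro n. destruct (psum_reidx_le a f n Ha Hfi) as [K HK]. pose proof (psum_le_lim a l K Ha Hs). lra. }
  assert (Hg : Un_growing (psum (fun k => a (f k)))).
  { intro n. simpl. specialize (Ha (f n)). lra. }
  destruct (growing_cv _ Hg) as [l' Hl'].
  { exists l. intros z [n E]. subst. auto. }
  assert (l' <= l).
  { apply Rnot_lt_le. intro Hlt. destruct (Hl' (l' - l)) as [N HN]; [lra|].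
    specialize (HN N (le_n _)). specialize (Hb N). unfold R_dist in HN. apply Rabs_def2 in HN. lra. }
  assert (l <= l').
  { assert (Hb2 : forall n, psum a n <= l').
    { intro n. destruct (psum_reidx_le (fun k => a (f k)) g n (fun i => Ha (f i)) Hgi) as [K HK].
      pose proof (growing_ineq _ _ Hg Hl' K).
      assert (psum (fun k => a (f (g k))) n = psum a n) by (apply psum_ext; intro; rewrite Hfg; auto).
      lra. }
    apply Rnot_lt_le. intro Hlt. destruct (Hs (l - l')) as [N HN]; [lra|].
    specialize (HN N (le_n _)). specialize (Hb2 N). unfold R_dist in HN. apply Rabs_def2 in HN. lra. }
  replace l with l' by lra. auto. Qed.

Lemma sort_exists x s : allpos x -> ssum x s ->
  exists sg rk : nat -> nat, (forall i, sg (rk i) = i) /\ (forall k, rk (sg k) = k) /\ decr (fun k => x (sg k)).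
Proof. intros Hp Hs.
  assert (finpred : forall j, exists B, forall i, (B <= i)%nat -> x i < x j).
  { intro j. destruct (y_small x s Hp Hs (x j) (Hp j)) as [N HN]. exists N. auto. }
  set (Bf := fun j => proj1_sig (constructive_indefinite_description _ (finpred j))).
  assert (HB : forall j i, (Bf j <= i)%nat -> x i < x j).
  { intro j. unfold Bf. destruct (constructive_indefinite_description _ (finpred j)). simpl. auto. }
  set (prec := fun i j => x j < x i \/ (x i = x j /\ (i < j)%nat)).
  set (precb := fun i j => if Rlt_dec (x j) (x i) then true else if Req_dec_T (x i) (x j) then Nat.ltb i j else false).
  assert (Hpb : forall i j, precb i j = true <-> prec i j).
  { intros i j. unfold precb, prec. destruct (Rlt_dec (x j) (x i)).
    - split; auto.
    - destruct (Req_dec_T (x i) (x j)).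
      + rewrite Nat.ltb_lt. split; [auto|]. intros [H|[_ H]]; [lra|auto].
      + split; [discriminate|]. intros [H|[H _]]; lra. }
  set (PL := fun j => filter (fun i => precb i j) (seq 0 (Bf j))).
  assert (PLi : forall i j, In i (PL j) <-> prec i j).
  { intros i j. unfold PL. rewrite filter_In, in_seq, Hpb. split; [tauto|].
    intro H. split; auto. split; [lia|]. destruct (le_lt_dec (Bf j) i) as [Hle|]; [|lia].
    specialize (HB j i Hle). unfold prec in H. destruct H as [H|[H _]]; lra. }
  assert (PLnd : forall j, NoDup (PL j)). { intro j. apply NoDup_filter. apply seq_NoDup. }
  set (rk := fun j => length (PL j)).
  assert (ptrans : forall i j k, prec i j -> prec j k -> prec i k).
  { unfold prec. intros i j k [H1|[H1 H1']] [H2|[H2 H2']]; try (left; lra). right. split; [lra|lia]. }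
  assert (pirr : forall i, ~ prec i i). { unfold prec. intros i [H|[_ H]]; [lra|lia]. }
  assert (ptot : forall i j, i <> j -> prec i j \/ prec j i).
  { unfold prec. intros i j Hne. destruct (Rtotal_order (x i) (x j)) as [H|[H|H]]; [right; left; lra| |left; left; lra].
    destruct (lt_dec i j); [left; right; auto|right; right; split; [lra|lia]]. }
  assert (rk_lt : forall i j, prec i j -> (rk i < rk j)%nat).
  { intros i j H. unfold rk. change (length (i :: PL i) <= length (PL j))%nat.
    apply NoDup_incl_length.
    - constructor; auto. rewrite PLi. apply pirr.
    - intros w [E|Hw]; [subst; apply PLi; auto|]. apply PLi. apply PLi in Hw. eauto. }
  assert (rk_inj : forall i j, rk i = rk j -> i = j).
  { intros i j E. destruct (Nat.eq_dec i j); auto. destruct (ptot i j n) as [H|H]; apply rk_lt in H; lia. }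
  assert (rk_inv : forall i j, (rk i < rk j)%nat -> prec i j).
  { intros i j H. destruct (Nat.eq_dec i j); [subst; lia|]. destruct (ptot i j n) as [H'|H']; auto.
    apply rk_lt in H'. lia. }
  assert (surj : forall k, exists j, rk j = k).
  { intro k.
    assert (Hex : exists j, (k <= rk j)%nat).
    { apply NNPP. intro Hno.
      assert (Hall : forall j, (rk j < k)%nat). { intro j. destruct (le_lt_dec k (rk j)); auto. exfalso; eauto. }
      assert (length (map rk (seq 0 (S k))) <= length (seq 0 k))%nat.
      { apply NoDup_incl_length.
        - apply Injective_map_NoDup; [intros a b; apply rk_inj|apply seq_NoDup].
        - intros w Hw. apply in_map_iff in Hw. destruct Hw as [j [E _]]. subst. apply in_seq. specialize (Hall j). lia. }
      rewrite length_map, !length_seq in H. lia. }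
    destruct Hex as [j Hj]. destruct (Nat.eq_dec (rk j) k) as [E|E]; [eauto|].
    assert (Hinc : incl (seq 0 (rk j)) (map rk (PL j))).
    { apply NoDup_length_incl.
      - apply Injective_map_NoDup; [intros a b; apply rk_inj|apply PLnd].
      - rewrite length_map, length_seq. unfold rk. lia.
      - intros w Hw. apply in_map_iff in Hw. destruct Hw as [i [E2 Hi]]. subst. apply in_seq.
        apply PLi in Hi. apply rk_lt in Hi. lia. }
    assert (In k (seq 0 (rk j))) by (apply in_seq; lia).
    apply Hinc in H. apply in_map_iff in H. destruct H as [i [E2 _]]. eauto. }
  set (sg := fun k => proj1_sig (constructive_indefinite_description _ (surj k))).
  assert (Hsg : forall k, rk (sg k) = k).
  { intro k. unfold sg. destruct (constructive_indefinite_description _ (surj k)). simpl. auto. }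
  exists sg, rk. split; [|split; auto].
  - intro i. apply rk_inj. apply Hsg.
  - intro k. assert (H : prec (sg k) (sg (S k))) by (apply rk_inv; rewrite !Hsg; lia).
    unfold prec in H. destruct H as [H|[H _]]; lra. Qed.

Lemma not_in_I1 : ~ in_I1 (1 :: 2 :: 4 :: nil)%nat.
Proof. intros [x [[Hpos [s Hs]] [[a [b [Hab HI]]] [HC1 HC2]]]].
  apply inf_ssum in Hs. assert (Hp : allpos x) by exact Hpos.
  destruct (sort_exists x s Hp Hs) as [sg [rk [H1 [H2 Hd]]]].
  set (y := fun k => x (sg k)) in *.
  assert (Hpy : allpos y) by (intro k; apply Hp).
  assert (tr : forall e v, rep x e v -> rep y (fun k => e (sg k)) v).
  { intros e v H. unfold rep in *. apply (rearr (tm x e) v sg rk); auto.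
    intro i. apply tm_nonneg; auto. }
  assert (trinv : forall e v, rep y e v -> rep x (fun i => e (rk i)) v).
  { intros e v H. unfold rep in *. pose proof (rearr (tm y e) v rk sg (tm_nonneg y e Hpy) H2 H1 H) as H'.
    refine (ssum_ext _ _ _ _ H'). intro i. unfold tm, y. rewrite H1. auto. }
  assert (Hcomp : forall e : nat -> bool, (fun k => e (rk (sg k))) = e).
  { intro e. apply functional_extensionality. intro k. rewrite H2. auto. }
  assert (ach_eq : forall v, achievement_set y v <-> achievement_set x v).
  { intro v. rewrite !ach_rep. split; intros [e He].
    - exists (fun i => e (rk i)). auto.
    - exists (fun k => e (sg k)). auto. }
  assert (card_tr : forall v n, has_card (fun e => represents x e v) n -> has_card (fun e => represents y e v) n).
  { intros v n [l [Hl [Hnd HP]]]. exists (map (fun e => fun k => e (sg k)) l). split; [rewrite length_map; auto|]. split.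
    - apply Injective_map_NoDup; auto. intros e f E. apply functional_extensionality. intro i.
      rewrite <- (H1 i). apply (f_equal (fun g => g (rk i))) in E. auto.
    - intro e. rewrite represents_rep. split.
      + intro He. apply in_map_iff. exists (fun i => e (rk i)). split; [apply Hcomp|].
        apply HP. apply represents_rep. auto.
      + intro He. apply in_map_iff in He. destruct He as [f [E Hf]]. subst. apply tr.
        apply represents_rep. apply HP. auto. }
  apply (sorted_main y s a b Hpy).
  - apply (rearr x s sg rk); auto. intro i; apply Rlt_le; auto.
  - auto.
  - intro v. rewrite ach_eq. auto.
  - intros v Hv. apply ach_eq in Hv. destruct (HC1 v Hv) as [n [Hn Hc]]. exists n. split; auto.
  - destruct (HC2 4%nat) as [v [Hv Hc]]; [simpl; auto|]. exists v. auto.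
Qed.

Definition x3 (n : nat) : R := match n with 0%nat => 3 | 1%nat => 3 | S (S k) => (1/2)^k end.
Definition cv (b0 b1 : bool) : R := (if b0 then 3 else 0) + (if b1 then 3 else 0).
Definition pf (b0 b1 : bool) : nat -> bool := fun i => match i with 0%nat => b0 | 1%nat => b1 | _ => false end.
Definition tp (e : nat -> bool) : nat -> bool := fun i => match i with 0%nat => false | 1%nat => false | _ => e i end.

Lemma x3pos : allpos x3.
Proof. intros [|[|k]]; simpl; try lra. apply pow_lt. lra. Qed.

Lemma geo_psum n : psum (fun k => (1/2)^k) n = 2 - 2*(1/2)^n.
Proof. induction n; simpl; [lra|]. rewrite IHn. lra. Qed.

Lemma x3_psum n : psum x3 (S (S n)) = 8 - 2*(1/2)^n.
Proof. induction n.
  - simpl. lra.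
  - change (psum x3 (S (S (S n)))) with (psum x3 (S (S n)) + x3 (S (S n))). rewrite IHn. simpl. lra. Qed.

Lemma x3_sum : ssum x3 8.
Proof. intros eps He. destruct (pow_lt_1_zero (1/2) ltac:(rewrite Rabs_right; lra) (eps/2) ltac:(lra)) as [N HN].
  exists (S (S N)). intros n Hn. destruct n as [|[|n]]; try lia. rewrite x3_psum. unfold R_dist.
  specialize (HN n ltac:(lia)). rewrite Rabs_right in HN by (apply Rle_ge, pow_le; lra).
  pose proof (pow_le (1/2) n ltac:(lra)).
  rewrite Rabs_left1; lra. Qed.

Lemma x3_rt n : rt x3 8 (S (S n)) = 2*(1/2)^n.
Proof. unfold rt. rewrite x3_psum. ring. Qed.

Lemma x3_rt2 : rt x3 8 2 = 2.
Proof. unfold rt. simpl. lra. Qed.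

Lemma x3_bin : binf x3 8 2.
Proof. intros n Hn. destruct n as [|[|k]]; try lia. change (S (S (S k))) with (S (S (S k))).
  rewrite x3_rt. simpl. field. Qed.

Lemma x3_HK n : (2 <= n)%nat -> x3 n <= rt x3 8 (S n).
Proof. intro H. rewrite (x3_bin n H). lra. Qed.

Lemma rep_pf b0 b1 : rep x3 (pf b0 b1) (cv b0 b1).
Proof. unfold rep. replace (cv b0 b1) with (psum (tm x3 (pf b0 b1)) 2).
  - apply ssum_fin. intros i Hi. unfold tm, pf. destruct i as [|[|i]]; auto; lia.
  - simpl. unfold tm, pf, cv. simpl. destruct b0, b1; ring. Qed.

Lemma disj_pf b0 b1 f : supp_ge f 2 -> disj (pf b0 b1) f.
Proof. intros H i Hi. apply H. destruct i as [|[|i]]; [lia|lia|]. discriminate. Qed.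

Lemma decomp e : e = uni (pf (e 0%nat) (e 1%nat)) (tp e).
Proof. apply functional_extensionality. intros [|[|i]]; unfold uni, pf, tp; simpl;
  try (destruct (e _); auto). Qed.

Lemma supp_tp e : supp_ge (tp e) 2.
Proof. intros [|[|i]] Hi; auto; lia. Qed.

Lemma rep_tp e v : rep x3 e v -> rep x3 (tp e) (v - cv (e 0%nat) (e 1%nat)).
Proof. intro H. rewrite (decomp e) in H. apply (rep_diff x3 _ _ _ _ (disj_pf _ _ _ (supp_tp e)) H (rep_pf _ _)). Qed.

Lemma tail_range f t : supp_ge f 2 -> rep x3 f t -> 0 <= t <= 2.
Proof. intros H1 H2. split; [apply (rep_nonneg x3 f t x3pos H2)|].
  rewrite <- x3_rt2. apply (rep_tail_le x3 8 f t 2 x3pos x3_sum H1 H2). Qed.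

Lemma cv_sep v a b c d : 0 <= v - cv a b <= 2 -> 0 <= v - cv c d <= 2 -> cv a b = cv c d.
Proof. unfold cv. destruct a, b, c, d; intros; lra. Qed.

Lemma join_rep b0 b1 f t : supp_ge f 2 -> rep x3 f t -> rep x3 (uni (pf b0 b1) f) (cv b0 b1 + t).
Proof. intros H1 H2. apply rep_union; auto. apply disj_pf; auto. apply rep_pf. Qed.

Lemma join_inj b0 b1 c0 c1 f f' : supp_ge f 2 -> supp_ge f' 2 ->
  uni (pf b0 b1) f = uni (pf c0 c1) f' -> b0 = c0 /\ b1 = c1 /\ f = f'.
Proof. intros H1 H2 E.
  pose proof (f_equal (fun g => g 0%nat) E) as E0. pose proof (f_equal (fun g => g 1%nat) E) as E1.
  cbv beta in E0, E1. unfold uni, pf in E0, E1. rewrite H1, H2 in E0, E1 by lia.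
  rewrite !Bool.orb_false_r in E0, E1. split; [auto|split; [auto|]].
  apply functional_extensionality. intros [|[|i]]; [rewrite H1, H2 by lia; auto|rewrite H1, H2 by lia; auto|].
  pose proof (f_equal (fun g => g (S (S i))) E) as E2. cbv beta in E2. unfold uni, pf in E2. simpl in E2. auto. Qed.

Definition plist (b0 b1 : bool) : list (bool * bool) :=
  if xorb b0 b1 then [(true,false);(false,true)] else [(b0,b1)].

Lemma plist_spec b0 b1 c0 c1 : In (c0,c1) (plist b0 b1) <-> cv c0 c1 = cv b0 b1.
Proof. unfold plist, cv. destruct b0, b1, c0, c1; simpl; split; intro H; try lra;
  try (intuition congruence); try (exfalso; lra). Qed.

Lemma plist_nd b0 b1 : NoDup (plist b0 b1).
Proof. unfold plist. destruct b0, b1; simpl; repeat constructor; simpl; intuition congruence. Qed.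

Lemma NoDup_prod {A B} (l1 : list A) (l2 : list B) : NoDup l1 -> NoDup l2 -> NoDup (list_prod l1 l2).
Proof. intros H1 H2. induction H1 as [|a l1 Ha Hl1 IH]; simpl; [constructor|].
  apply NoDup_app; auto.
  - apply Injective_map_NoDup; auto. intros u w E. inversion E; auto.
  - intros [p q] Hin Hin2. apply in_map_iff in Hin. destruct Hin as [z [E _]]. inversion E; subst.
    apply in_prod_iff in Hin2. tauto. Qed.

Definition jn (p : (bool * bool) * (nat -> bool)) : nat -> bool := uni (pf (fst (fst p)) (snd (fst p))) (snd p).

Lemma card_gen v b0 b1 L : NoDup L -> (forall f, (supp_ge f 2 /\ rep x3 f (v - cv b0 b1)) <-> In f L) -> L <> [] ->
  has_card (fun e => represents x3 e v) (length (plist b0 b1) * length L).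
Proof. intros Hnd HL Hne. exists (map jn (list_prod (plist b0 b1) L)).
  split; [rewrite length_map, length_prod; auto|]. split.
  - apply Injective_map_NoDup_in; [|apply NoDup_prod; auto using plist_nd].
    intros [[p0 p1] f] [[q0 q1] g] Hp Hq E. apply in_prod_iff in Hp, Hq.
    destruct Hp as [_ Hp], Hq as [_ Hq].
    apply HL in Hp as [Sf _]. apply HL in Hq as [Sg _]. unfold jn in E. simpl in E.
    destruct (join_inj _ _ _ _ _ _ Sf Sg E) as [-> [-> ->]]. auto.
  - destruct L as [|f0 L0]; [congruence|].
    assert (Hr : 0 <= v - cv b0 b1 <= 2).
    { destruct (HL f0) as [_ H]. destruct H as [S0 R0]; [simpl; auto|]. apply (tail_range f0); auto. }
    intro e. rewrite represents_rep. split.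
    + intro He. apply in_map_iff. exists ((e 0%nat, e 1%nat), tp e). split.
      * unfold jn. simpl. symmetry. apply decomp.
      * pose proof (rep_tp e v He) as Ht. pose proof (tail_range _ _ (supp_tp e) Ht) as Hr2.
        pose proof (cv_sep v _ _ _ _ Hr2 Hr) as Ecv.
        apply in_prod_iff. split; [apply plist_spec; auto|]. apply HL. rewrite <- Ecv. split; auto. apply supp_tp.
    + intro He. apply in_map_iff in He. destruct He as [[[c0 c1] f] [E Hin]]. subst e.
      apply in_prod_iff in Hin. destruct Hin as [Hp Hf]. apply plist_spec in Hp. apply HL in Hf as [Sf Rf].
      unfold jn. simpl. replace v with (cv c0 c1 + (v - cv b0 b1)) by lra. apply join_rep; auto. Qed.

Definition TR t f := supp_ge f 2 /\ rep x3 f t.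

Lemma TRlist t : (exists f, TR t f) ->
  exists L, (length L = 1%nat \/ length L = 2%nat) /\ NoDup L /\ forall f, TR t f <-> In f L.
Proof. intros [f Hf].
  destruct (classic (exists f1 f2, TR t f1 /\ TR t f2 /\ f1 <> f2)) as [[f1 [f2 [H1 [H2 N12]]]]|Hno].
  - exists [f1; f2]. split; [auto|]. split; [repeat constructor; simpl; intuition congruence|].
    intro g. split.
    + intro Hg. simpl. destruct (classic (g = f1)) as [|Na]; [auto|]. destruct (classic (g = f2)) as [|Nb]; [auto|].
      exfalso. destruct Hg, H1, H2. apply (TD x3 8 2 g f1 f2 t x3pos x3_sum x3_bin); auto.
    + simpl. intros [E|[E|[]]]; subst; auto.
  - exists [f]. split; [auto|]. split; [repeat constructor; simpl; tauto|].
    intro g. split.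
    + intro Hg. simpl. left. apply NNPP. intro Ne. apply Hno. exists f, g. auto.
    + simpl. intros [E|[]]; subst; auto. Qed.

Definition IL : list (R * R) := [(0,2);(3,5);(6,8)].

Lemma ach_char v : achievement_set x3 v <-> exists p, In p IL /\ fst p <= v <= snd p.
Proof. rewrite ach_rep. split.
  - intros [e He]. pose proof (tail_range _ _ (supp_tp e) (rep_tp e v He)) as Hr.
    unfold cv in Hr. destruct (e 0%nat), (e 1%nat).
    + exists (6,8). simpl. split; [auto|lra].
    + exists (3,5). simpl. split; [auto|lra].
    + exists (3,5). simpl. split; [auto|lra].
    + exists (0,2). simpl. split; [auto|lra].
  - intros [p [Hp Hv]].
    assert (Hc : exists b0 b1, 0 <= v - cv b0 b1 <= 2).
    { simpl in Hp. unfold cv. destruct Hp as [E|[E|[E|[]]]]; subst; simpl in Hv.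
      - exists false, false. lra.
      - exists true, false. lra.
      - exists true, true. lra. }
    destruct Hc as [b0 [b1 Hr]].
    destruct (kakeya x3 8 2 (v - cv b0 b1) x3pos x3_sum x3_HK) as [S1 R1]. { rewrite x3_rt2. lra. }
    exists (uni (pf b0 b1) (gre x3 2 (v - cv b0 b1))). replace v with (cv b0 b1 + (v - cv b0 b1)) at 2 by ring.
    apply join_rep; auto. Qed.

Lemma TR0 : forall f, TR 0 f <-> In f [fun _ => false].
Proof. intro f. split.
  - intros [_ Hf]. left. apply functional_extensionality. intro i. symmetry. apply (rep_zero x3 f i x3pos Hf).
  - intros [E|[]]. subst. split; [intros i _; auto|apply rep_false]. Qed.

Lemma in_I_124 : in_I (1 :: 2 :: 4 :: nil)%nat.
Proof. exists x3. split; [split; [apply x3pos|exists 8; apply inf_ssum, x3_sum]|]. split.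
  - exists IL. split.
    + intros p Hp. simpl in Hp. destruct Hp as [E|[E|[E|[]]]]; subst; simpl; lra.
    + apply ach_char.
  - split.
    + intros v Hv. apply ach_rep in Hv. destruct Hv as [e0 He0].
      destruct (TRlist (v - cv (e0 0%nat) (e0 1%nat))) as [L [HLl [HLnd HL]]].
      { exists (tp e0). split; [apply supp_tp|apply rep_tp; auto]. }
      pose proof (card_gen v (e0 0%nat) (e0 1%nat) L HLnd HL) as Hc.
      eexists. split; [|apply Hc; intro E; subst; simpl in HLl; lia].
      unfold plist. destruct (e0 0%nat), (e0 1%nat); simpl; destruct HLl as [-> | ->]; simpl; tauto.
    + intros n Hn. simpl in Hn. destruct Hn as [E|[E|[E|[]]]]; subst.
      * exists 0. split; [apply ach_rep; exists (fun _ => false); apply rep_false|].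
        pose proof (card_gen 0 false false [fun _ => false]) as Hc.
        apply Hc; [repeat constructor; simpl; tauto| |congruence].
        intro f. assert (E : 0 - cv false false = 0) by (unfold cv; ring). rewrite E. apply TR0.
      * exists 3. split.
        { apply ach_rep. exists (pf true false). pose proof (rep_pf true false). unfold cv in H. simpl in H.
          replace 3 with (3 + 0) by ring. auto. }
        pose proof (card_gen 3 true false [fun _ => false]) as Hc.
        apply Hc; [repeat constructor; simpl; tauto| |congruence].
        intro f. assert (E : 3 - cv true false = 0) by (unfold cv; ring). rewrite E. apply TR0.
      * exists 4.
        assert (Rs : TR 1 (sing 2)). { split; [intros i Hi; unfold sing; bsimpl; auto|].
          pose proof (rep_sing x3 2) as H. assert (E : x3 2 = 1) by (simpl; ring). rewrite E in H. exact H. }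
        assert (Rt : TR 1 (tset 2)). { split; [intros i Hi; unfold tset; bsimpl; auto|].
          pose proof (rep_tset x3 8 2 x3_sum) as H. rewrite (x3_rt 1) in H. assert (E : 2 * (1/2)^1 = 1) by (simpl; field). rewrite E in H. exact H. }
        assert (Nst : sing 2 <> tset 2). { apply (neq_at _ _ 2). unfold sing, tset. bsimpl; congruence. }
        split.
        { apply ach_rep. exists (uni (pf true false) (sing 2)). replace 4 with (cv true false + 1) by (unfold cv; simpl; ring).
          destruct Rs. apply join_rep; auto. }
        pose proof (card_gen 4 true false [sing 2; tset 2]) as Hc.
        apply Hc; [repeat constructor; simpl; intuition congruence| |congruence].
        intro f. assert (E : 4 - cv true false = 1) by (unfold cv; ring). rewrite E. split.
        -- intro Hf. simpl. destruct (classic (f = sing 2)) as [|Na]; [auto|].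
           destruct (classic (f = tset 2)) as [|Nb]; [auto|]. exfalso.
           destruct Hf, Rs, Rt. apply (TD x3 8 2 f (sing 2) (tset 2) 1 x3pos x3_sum x3_bin); auto.
        -- simpl. intros [E1|[E1|[]]]; subst; auto.
Qed.

Theorem theorem6p9 : in_I (1 :: 2 :: 4 :: nil)%nat /\ ~ in_I1 (1 :: 2 :: 4 :: nil)%nat.
Proof. split; [apply in_I_124|apply not_in_I1]. Qed.
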